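(* In the relatively free algebra $R=\mathbb{K}\langle Y\cup Z\rangle/I$, the image of every $Y$-proper polynomial is a linear combination of the images of polynomials $g_K=h(y_{i_1},\dots,y_{i_{2m+n}},z_{j_1},\dots,z_{j_{n+2r}})\,z_{k_1}\cdots z_{k_q}$ with $m,n,r,q\ge0$, $i_1<i_2<\dots<i_{2m+n}$, $j_1\le\dots\le j_{n+2r}$ and $k_1<\dots<k_q$.
   Context: $\mathbb{K}$ is an infinite field of characteristic different from $2$. $\mathbb{K}\langle Y\cup Z\rangle$ is the free associative algebra on disjoint countable sets $Y=\{y_1,y_2,\dots\}$ (degree $0$) and $Z=\{z_1,z_2,\dots\}$ (degree $1$). Notation: $[a,b]=ab-ba$, $[a_1,\dots,a_n]=[[a_1,\dots,a_{n-1}],a_n]$, $a\circ b=ab+ba$. A polynomial is $Y$-proper if it lies in the subalgebra of $\mathbb{K}\langle Y\cup Z\rangle$ generated by $Z$ and all commutators $[x_1,\dots,x_s]$, $s\ge2$, of variables $x_i\in Y\cup Z$. A $T_2$-ideal is an ideal of $\mathbb{K}\langle Y\cup Z\rangle$ stable under all graded endomorphisms (those sending each $y_i$ to a polynomial of degree $0$ and each $z_i$ to one of degree $1$). $I$ is the $T_2$-ideal generated by: (1) $[y_1,y_2,y_3]$, $[y_1,y_2,z_3]$; (2) $[y_1,z_2,y_3]$; (3) $[y_1,z_2]\circ z_3$; (4) $[z_1\circ z_2,z_3]$; (5) $(z_1\circ z_2)(z_3\circ z_4)-(z_1\circ z_3)(z_2\circ z_4)$; (6) $[x_1,y_2][y_3,x_4]+[x_1,y_3][y_2,x_4]$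 for all choices $x_1\in\{y_1,z_1\}$, $x_4\in\{y_4,z_4\}$; (7) $[y_1,z_2](z_3\circ z_4)-[y_1,z_3](z_2\circ z_4)$. For indices as indicated, $h(y_{i_1},\dots,y_{i_{2m+n}},z_{j_1},\dots,z_{j_{n+2r}})=[y_{i_1},y_{i_2}]\cdots[y_{i_{2m-1}},y_{i_{2m}}]\cdot[y_{i_{2m+1}},z_{j_1}]\cdots[y_{i_{2m+n}},z_{j_n}]\cdot(z_{j_{n+1}}\circ z_{j_{n+2}})\cdots(z_{j_{n+2r-1}}\circ z_{j_{n+2r}})$ (empty products equal $1$). *)

(* Defs.v *)
(* Free associative algebra K<Y u Z> built concretely:
   a polynomial is a finite formal sum (list of (coefficient, word) pairs);
   two lists denote the same algebra element iff they have the same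
   coefficient function [coef] (relation [peq]). All sets of algebra
   elements below (the T2-ideal I, the Y-proper polynomials) are closed
   under [peq], i.e. they are genuinely sets of algebra elements. *)
From HB Require Import structures.
From Stdlib Require List.
From mathcomp Require Import all_boot all_algebra.
Set Implicit Arguments. Unset Strict Implicit. Unset Printing Implicit Defensive.
Import GRing.Theory.
Local Open Scope ring_scope.

(* A variable: (false, i) is y_i (degree 0), (true, i) is z_i (degree 1). *)
Definition var := (bool * nat)%type.

Section FreeAlg.
Variable K : fieldType.

Definition fpoly := seq (K * seq var).

Definition coef (p : fpoly) (w : seq var) : K := \sum_(t <- p | t.2 == w) t.1.
Definition peq (p q : fpoly) : Prop := forall w, coef p w = coef q w.

Definition pzero : fpoly := [::].
Definition pone : fpoly := [:: (1, [::])].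
Definition pvar (x : var) : fpoly := [:: (1, [:: x])].
Definition padd (p q : fpoly) : fpoly := p ++ q.
Definition pscale (c : K) (p : fpoly) : fpoly := [seq (c * t.1, t.2) | t <- p].
Definition psub (p q : fpoly) : fpoly := padd p (pscale (-1) q).
Definition pmul (p q : fpoly) : fpoly := [seq (a.1 * b.1, a.2 ++ b.2) | a <- p, b <- q].
Definition pprod (s : seq fpoly) : fpoly := foldr pmul pone s.
Definition psum (s : seq fpoly) : fpoly := foldr padd pzero s.

Definition comm (p q : fpoly) : fpoly := psub (pmul p q) (pmul q p).
Definition jordan (p q : fpoly) : fpoly := padd (pmul p q) (pmul q p).

Definition y (i : nat) : fpoly := pvar (false, i).
Definition z (i : nat) : fpoly := pvar (true, i).

Definition lcomm (x : var) (xs : seq var) : fpoly :=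
  foldl (fun a b => comm a (pvar b)) (pvar x) xs.

Definition eval (phi : var -> fpoly) (p : fpoly) : fpoly :=
  psum [seq pscale t.1 (pprod (map phi t.2)) | t <- p].

Definition wdeg (w : seq var) : nat := (count (fun x : var => x.1) w %% 2)%N.
Definition homog (d : nat) (p : fpoly) : Prop :=
  forall w, coef p w != 0 -> wdeg w = d.
Definition graded_endo (phi : var -> fpoly) : Prop :=
  forall x : var, homog (nat_of_bool x.1) (phi x).

Definition gens : seq fpoly :=
  [:: comm (comm (y 1) (y 2)) (y 3);
      comm (comm (y 1) (y 2)) (z 3);
      comm (comm (y 1) (z 2)) (y 3);
      jordan (comm (y 1) (z 2)) (z 3);
      comm (jordan (z 1) (z 2)) (z 3);
      psub (pmul (jordan (z 1) (z 2)) (jordan (z 3) (z 4)))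
           (pmul (jordan (z 1) (z 3)) (jordan (z 2) (z 4)))] ++
  [seq padd (pmul (comm x1 (y 2)) (comm (y 3) x4))
            (pmul (comm x1 (y 3)) (comm (y 2) x4))
     | x1 <- [:: y 1; z 1], x4 <- [:: y 4; z 4]] ++
  [:: psub (pmul (comm (y 1) (z 2)) (jordan (z 3) (z 4)))
           (pmul (comm (y 1) (z 3)) (jordan (z 2) (z 4)))].

Inductive inI : fpoly -> Prop :=
| I_gen g : List.In g gens -> inI g
| I_peq p q : inI p -> peq p q -> inI q
| I_zero : inI pzero
| I_add p q : inI p -> inI q -> inI (padd p q)
| I_scale c p : inI p -> inI (pscale c p)
| I_mull a p : inI p -> inI (pmul a p)
| I_mulr p a : inI p -> inI (pmul p a)
| I_endo phi p : graded_endo phi -> inI p -> inI (eval phi p).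

Inductive Yproper : fpoly -> Prop :=
| YP_one : Yproper pone
| YP_z i : Yproper (z i)
| YP_comm x xs : (1 <= size xs)%N -> Yproper (lcomm x xs)
| YP_peq p q : Yproper p -> peq p q -> Yproper q
| YP_add p q : Yproper p -> Yproper q -> Yproper (padd p q)
| YP_scale c p : Yproper p -> Yproper (pscale c p)
| YP_mul p q : Yproper p -> Yproper q -> Yproper (pmul p q).

End FreeAlg.

Record gdata := GData {
  gm : nat; gn : nat; gr : nat; gq : nat;
  gi : seq nat; gj : seq nat; gk : seq nat }.

Definition admissible (d : gdata) : Prop :=
  size (gi d) = (2 * gm d + gn d)%N /\ sorted ltn (gi d) /\
  size (gj d) = (gn d + 2 * gr d)%N /\ sorted leq (gj d) /\
  size (gk d) = gq d /\ sorted ltn (gk d).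

Section GK.
Variable K : fieldType.

(* h(y_{i_1},...,y_{i_{2m+n}}, z_{j_1},...,z_{j_{n+2r}}) (0-based positions) *)
Definition hpoly (d : gdata) : fpoly K :=
  let ii := gi d in let jj := gj d in
  pmul (pprod [seq comm (y K (nth 0 ii (2 * a))) (y K (nth 0 ii (2 * a).+1))
              | a <- iota 0 (gm d)])
  (pmul (pprod [seq comm (y K (nth 0 ii (2 * gm d + b))) (z K (nth 0 jj b))
               | b <- iota 0 (gn d)])
        (pprod [seq jordan (z K (nth 0 jj (gn d + 2 * c)))
                           (z K (nth 0 jj (gn d + 2 * c).+1))
               | c <- iota 0 (gr d)])).

Definition gK (d : gdata) : fpoly K :=
  pmul (hpoly d) (pprod [seq z K k | k <- gk d]).
End GK.

(* Main.v *)
Require Import Defs.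
From Stdlib Require List.
From Stdlib Require Import ClassicalEpsilon.
From HB Require Import structures.
From mathcomp Require Import all_boot all_algebra ring zify.
Set Implicit Arguments. Unset Strict Implicit. Unset Printing Implicit Defensive.
Import GRing.Theory.
Local Open Scope ring_scope.

Ltac sl := try (match goal with |- is_true _ => lia | |- (_ = _ :> nat) => lia | |- (_ = _ :> bool) => lia end).

Section Alg.
Variable K : fieldType.
Local Notation fpoly := (fpoly K).
Implicit Types p q r : fpoly.

Lemma coef_cat (p q : fpoly) w : coef (p ++ q) w = coef p w + coef q w.
Proof. by rewrite /coef big_cat. Qed.

Lemma coef_nil w : coef (pzero K) w = 0.
Proof. by rewrite /coef big_nil. Qed.

Lemma coefE (p : fpoly) w : coef p w = \sum_(t <- p) (if t.2 == w then t.1 else 0).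
Proof. by rewrite /coef big_mkcond. Qed.

Lemma coef_scale c (p : fpoly) w : coef (pscale c p) w = c * coef p w.
Proof.
rewrite !coefE /pscale big_map mulr_sumr; apply: eq_bigr => t _ /=.
by case: ifP; rewrite ?mulr0.
Qed.

Lemma coef_mul (p q : fpoly) w : coef (pmul p q) w =
  \sum_(a <- p) \sum_(b <- q) (if a.2 ++ b.2 == w then a.1 * b.1 else 0).
Proof. by rewrite coefE /pmul big_allpairs_dep. Qed.

Lemma sumL (p : fpoly) (G : seq var -> K) (U : seq (seq var)) :
  uniq U -> {subset map snd p <= U} ->
  \sum_(t <- p) t.1 * G t.2 = \sum_(u <- U) coef p u * G u.
Proof.
move=> uU sub.
under [RHS]eq_bigr => u _ do rewrite coefE mulr_suml.
rewrite exchange_big /=; apply: eq_big_seq => t tp.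
have tU : t.2 \in U by apply: sub; apply: map_f.
rewrite (big_rem _ tU) /= eqxx big1_seq ?addr0 // => u /andP[_ uin].
case: ifP => [/eqP E|]; last by rewrite mul0r.
by move: uin; rewrite mem_rem_uniq // inE E eqxx.
Qed.

Definition supp (p q : fpoly) := undup (map snd p ++ map snd q).

Lemma supp_uniq p q : uniq (supp p q). Proof. exact: undup_uniq. Qed.
Lemma supp_l p q : {subset map snd p <= supp p q}.
Proof. by move=> u up; rewrite mem_undup mem_cat up. Qed.
Lemma supp_r p q : {subset map snd q <= supp p q}.
Proof. by move=> u up; rewrite mem_undup mem_cat up orbT. Qed.

Lemma peq_sum (p p' : fpoly) G : peq p p' ->
  \sum_(t <- p) t.1 * G t.2 = \sum_(t <- p') t.1 * G t.2.
Proof.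
move=> E; rewrite (sumL G (supp_uniq p p') (@supp_l p p')).
rewrite (sumL G (supp_uniq p p') (@supp_r p p')).
by apply: eq_bigr => u _; rewrite E.
Qed.

Lemma coef_mul_l (p q : fpoly) w : coef (pmul p q) w =
  \sum_(a <- p) a.1 * \sum_(b <- q) (if a.2 ++ b.2 == w then b.1 else 0).
Proof.
rewrite coef_mul; apply: eq_bigr => a _; rewrite mulr_sumr; apply: eq_bigr => b _.
by case: ifP; rewrite ?mulr0.
Qed.

Lemma coef_mul_r (p q : fpoly) w : coef (pmul p q) w =
  \sum_(b <- q) b.1 * \sum_(a <- p) (if a.2 ++ b.2 == w then a.1 else 0).
Proof.
rewrite coef_mul exchange_big; apply: eq_bigr => b _; rewrite mulr_sumr; apply: eq_bigr => a _.
by case: ifP; rewrite ?mulr0 // mulrC.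
Qed.

Lemma peq_refl p : peq p p. Proof. by []. Qed.
Lemma peq_sym p q : peq p q -> peq q p. Proof. by move=> E w. Qed.
Lemma peq_trans p q r : peq p q -> peq q r -> peq p r.
Proof. by move=> E1 E2 w; rewrite E1. Qed.

Lemma peq_mull p p' q : peq p p' -> peq (pmul p q) (pmul p' q).
Proof.
move=> E w; rewrite !coef_mul_l.
exact: (peq_sum (fun u => \sum_(b <- q) (if u ++ b.2 == w then b.1 else 0)) E).
Qed.

Lemma peq_mulr p q q' : peq q q' -> peq (pmul p q) (pmul p q').
Proof.
move=> E w; rewrite !coef_mul_r.
exact: (peq_sum (fun u => \sum_(a <- p) (if a.2 ++ u == w then a.1 else 0)) E).
Qed.

Lemma peq_add p p' q q' : peq p p' -> peq q q' -> peq (padd p q) (padd p' q').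
Proof. by move=> E1 E2 w; rewrite !coef_cat E1 E2. Qed.

Lemma peq_scale c p p' : peq p p' -> peq (pscale c p) (pscale c p').
Proof. by move=> E w; rewrite !coef_scale E. Qed.

Lemma pmulA p q r : peq (pmul (pmul p q) r) (pmul p (pmul q r)).
Proof.
move=> w; rewrite coef_mul /pmul big_allpairs_dep coef_mul.
apply: eq_bigr => a _; rewrite big_allpairs_dep; apply: eq_bigr => b _.
by apply: eq_bigr => c _ /=; rewrite catA mulrA.
Qed.

Lemma pmulDl p q r : peq (pmul (padd p q) r) (padd (pmul p r) (pmul q r)).
Proof. by move=> w; rewrite coef_cat !coef_mul big_cat. Qed.

Lemma pmulDr p q r : peq (pmul p (padd q r)) (padd (pmul p q) (pmul p r)).
Proof. by move=> w; rewrite coef_cat !coef_mul -big_split; apply: eq_bigr => a _; rewrite big_cat. Qed.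

Lemma pmul1l p : peq (pmul (pone K) p) p.
Proof.
move=> w; rewrite coef_mul big_cons big_nil addr0 coefE; apply: eq_bigr => b _ /=.
by rewrite mul1r.
Qed.

Lemma pmul1r p : peq (pmul p (pone K)) p.
Proof.
move=> w; rewrite coef_mul coefE; apply: eq_bigr => b _ /=.
by rewrite big_cons big_nil addr0 cats0 mulr1.
Qed.

Lemma pmulZl c p q : peq (pmul (pscale c p) q) (pscale c (pmul p q)).
Proof.
move=> w; rewrite coef_scale !coef_mul big_map mulr_sumr; apply: eq_bigr => a _.
rewrite mulr_sumr; apply: eq_bigr => b _ /=; by case: ifP => _; rewrite ?mulr0 // mulrA.
Qed.

Lemma pmulZr c p q : peq (pmul p (pscale c q)) (pscale c (pmul p q)).
Proof.
move=> w; rewrite coef_scale !coef_mul mulr_sumr; apply: eq_bigr => a _.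
rewrite big_map mulr_sumr; apply: eq_bigr => b _ /=; case: ifP; rewrite ?mulr0 //.
by rewrite mulrCA.
Qed.

Lemma pscaleA a b p : peq (pscale a (pscale b p)) (pscale (a * b) p).
Proof. by move=> w; rewrite !coef_scale mulrA. Qed.

Lemma pscale1 p : peq (pscale 1 p) p.
Proof. by move=> w; rewrite coef_scale mul1r. Qed.

Lemma pscaleDr c p q : peq (pscale c (padd p q)) (padd (pscale c p) (pscale c q)).
Proof. by move=> w; rewrite !(coef_scale, coef_cat) mulrDr. Qed.

Lemma pscaleDl a b p : peq (pscale (a + b) p) (padd (pscale a p) (pscale b p)).
Proof. by move=> w; rewrite !(coef_scale, coef_cat) mulrDl. Qed.

Lemma paddC p q : peq (padd p q) (padd q p).
Proof. by move=> w; rewrite !coef_cat addrC. Qed.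

Lemma paddA p q r : peq (padd (padd p q) r) (padd p (padd q r)).
Proof. by move=> w; rewrite /padd catA. Qed.

Lemma padd0 p : peq (padd (pzero K) p) p.
Proof. by []. Qed.

Lemma psubv p : peq (psub p p) (pzero K).
Proof. by move=> w; rewrite coef_cat coef_scale coef_nil mulN1r subrr. Qed.

End Alg.

Section Quot.
Variable K : fieldType.
Local Notation fpoly := (fpoly K).
Implicit Types p q r : fpoly.

Definition eqv p q := inI (psub p q).

Ltac coefs := move=> ?; rewrite ?(coef_cat, coef_scale, coef_nil); ring.

Lemma eqv_refl p : eqv p p.
Proof. apply: (I_peq (I_zero K)); coefs. Qed.

Lemma peq_eqv p q : peq p q -> eqv p q.
Proof. move=> E; apply: (I_peq (I_zero K)) => w; rewrite !(coef_cat, coef_scale, coef_nil) E; ring. Qed.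

Lemma eqv_sym p q : eqv p q -> eqv q p.
Proof. move=> E; apply: (I_peq (I_scale (-1) E)); coefs. Qed.

Lemma eqv_trans p q r : eqv p q -> eqv q r -> eqv p r.
Proof. move=> E1 E2; apply: (I_peq (I_add E1 E2)); coefs. Qed.

Lemma eqv_add p p' q q' : eqv p p' -> eqv q q' -> eqv (padd p q) (padd p' q').
Proof. move=> E1 E2; apply: (I_peq (I_add E1 E2)); coefs. Qed.

Lemma eqv_scale c p p' : eqv p p' -> eqv (pscale c p) (pscale c p').
Proof. move=> E; apply: (I_peq (I_scale c E)); coefs. Qed.

Lemma eqv_mull p p' q : eqv p p' -> eqv (pmul p q) (pmul p' q).
Proof.
move=> E; apply: (I_peq (I_mulr q E)).
apply: peq_trans; first exact: pmulDl.
apply: peq_add => //; apply: pmulZl.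
Qed.

Lemma eqv_mulr p q q' : eqv q q' -> eqv (pmul p q) (pmul p q').
Proof.
move=> E; apply: (I_peq (I_mull p E)).
apply: peq_trans; first exact: pmulDr.
apply: peq_add => //; apply: pmulZr.
Qed.

Lemma eqv_mul p p' q q' : eqv p p' -> eqv q q' -> eqv (pmul p q) (pmul p' q').
Proof. move=> E1 E2; apply: eqv_trans (eqv_mull q E1) (eqv_mulr p' E2). Qed.

Definition eqvb p q : bool := if excluded_middle_informative (eqv p q) then true else false.

Lemma eqvbP p q : reflect (eqv p q) (eqvb p q).
Proof. by rewrite /eqvb; case: excluded_middle_informative => H; constructor. Qed.

Definition canon p := choose (eqvb p) p.

Lemma canon_eqv p : eqv p (canon p).
Proof. by apply/eqvbP; apply: chooseP; apply/eqvbP; apply: eqv_refl. Qed.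

Lemma canon_eq p q : eqv p q -> canon p = canon q.
Proof.
move=> E; rewrite /canon (@eq_choose _ (eqvb p) (eqvb q)).
  by apply: choose_id; apply/eqvbP; [apply: eqv_sym | apply: eqv_refl].
move=> r; apply/eqvbP/eqvbP => H.
  exact: eqv_trans (eqv_sym E) H.
exact: eqv_trans E H.
Qed.

Definition RR := {p : fpoly | canon p == p}.

Definition qpi_def p : RR := exist _ (canon p) (introT eqP (canon_eq (eqv_sym (canon_eqv p)))).
Definition qpi := locked qpi_def.

Lemma sval_qpi p : sval (qpi p) = canon p.
Proof. by rewrite /qpi -lock. Qed.

Lemma val_qpi p : eqv (sval (qpi p)) p.
Proof. rewrite sval_qpi; exact: eqv_sym (canon_eqv p). Qed.

Lemma qpi_val (a : RR) : qpi (sval a) = a.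
Proof. case: a => p h; apply/val_inj => /=; rewrite sval_qpi; exact/eqP. Qed.

Lemma qpiP p q : qpi p = qpi q <-> eqv p q.
Proof.
split=> [E|E]; last by apply/val_inj => /=; rewrite !sval_qpi; exact: canon_eq.
apply: eqv_trans (canon_eqv p) _; rewrite -sval_qpi E sval_qpi.
exact: eqv_sym (canon_eqv q).
Qed.

Lemma qpiW (P : RR -> Prop) : (forall p, P (qpi p)) -> forall a, P a.
Proof. by move=> H a; rewrite -(qpi_val a). Qed.

Definition rzero := qpi (pzero K).
Definition radd (a b : RR) := qpi (padd (sval a) (sval b)).
Definition ropp (a : RR) := qpi (pscale (-1) (sval a)).
Definition rone := qpi (pone K).
Definition rmul (a b : RR) := qpi (pmul (sval a) (sval b)).
Definition rscale (c : K) (a : RR) := qpi (pscale c (sval a)).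

Lemma raddE p q : radd (qpi p) (qpi q) = qpi (padd p q).
Proof. by apply/qpiP; apply: eqv_add; apply: val_qpi. Qed.
Lemma roppE p : ropp (qpi p) = qpi (pscale (-1) p).
Proof. by apply/qpiP; apply: eqv_scale; apply: val_qpi. Qed.
Lemma rmulE p q : rmul (qpi p) (qpi q) = qpi (pmul p q).
Proof. by apply/qpiP; apply: eqv_mul; apply: val_qpi. Qed.
Lemma rscaleE c p : rscale c (qpi p) = qpi (pscale c p).
Proof. by apply/qpiP; apply: eqv_scale; apply: val_qpi. Qed.

Lemma qpi_peq p q : peq p q -> qpi p = qpi q.
Proof. by move=> E; apply/qpiP; apply: peq_eqv. Qed.

Ltac ppeq X := first [apply: qpi_peq; apply: X | apply: esym; apply: qpi_peq; apply: X].

Lemma raddA : associative radd.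
Proof. by elim/qpiW=> p; elim/qpiW=> q; elim/qpiW=> r; rewrite !raddE; apply: qpi_peq; coefs. Qed.
Lemma raddC : commutative radd.
Proof. by elim/qpiW=> p; elim/qpiW=> q; rewrite !raddE; apply: qpi_peq; coefs. Qed.
Lemma radd0 : left_id rzero radd.
Proof. by elim/qpiW=> p; rewrite raddE. Qed.
Lemma raddN : left_inverse rzero ropp radd.
Proof.
elim/qpiW=> p; rewrite roppE raddE; apply: qpi_peq; coefs.
Qed.

HB.instance Definition _ := Choice.on RR.
HB.instance Definition _ := GRing.isZmodule.Build RR raddA raddC radd0 raddN.

Lemma rmulA : associative rmul.
Proof. move=> a b c; elim/qpiW: a => p; elim/qpiW: b => q; elim/qpiW: c => r; rewrite !rmulE; ppeq pmulA. Qed.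
Lemma rmul1 : left_id rone rmul.
Proof. by elim/qpiW=> p; rewrite rmulE; ppeq pmul1l. Qed.
Lemma rmul1r : right_id rone rmul.
Proof. by elim/qpiW=> p; rewrite rmulE; ppeq pmul1r. Qed.
Lemma rmulDl : left_distributive rmul radd.
Proof. by move=> a b c; elim/qpiW: a => p; elim/qpiW: b => q; elim/qpiW: c => r; rewrite !(rmulE,raddE); ppeq pmulDl. Qed.
Lemma rmulDr : right_distributive rmul radd.
Proof. by move=> a b c; elim/qpiW: a => p; elim/qpiW: b => q; elim/qpiW: c => r; rewrite !(rmulE,raddE); ppeq pmulDr. Qed.

HB.instance Definition _ := GRing.Zmodule_isPzRing.Build RR rmulA rmul1 rmul1r rmulDl rmulDr.

Lemma rscaleA a b v : rscale a (rscale b v) = rscale (a * b) v.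
Proof. by elim/qpiW: v => p; rewrite !rscaleE; ppeq pscaleA. Qed.
Lemma rscale1 : left_id 1 rscale.
Proof. by elim/qpiW=> p; rewrite !rscaleE; ppeq pscale1. Qed.
Lemma rscaleDr : right_distributive rscale (@GRing.add RR).
Proof. by move=> c; elim/qpiW=> p; elim/qpiW=> q; rewrite /GRing.add /= !(rscaleE,raddE); ppeq pscaleDr. Qed.
Lemma rscaleDl v : {morph rscale^~ v: a b / a + b}.
Proof. by elim/qpiW: v => p a b; rewrite /GRing.add /= !(rscaleE,raddE); ppeq pscaleDl. Qed.

HB.instance Definition _ := GRing.Zmodule_isLmodule.Build K RR rscaleA rscale1 rscaleDr rscaleDl.

Lemma qpiD p q : qpi (padd p q) = qpi p + qpi q.
Proof. by rewrite /GRing.add /= raddE. Qed.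
Lemma qpiM p q : qpi (pmul p q) = qpi p * qpi q.
Proof. by rewrite /GRing.mul /= rmulE. Qed.
Lemma qpiZ c p : qpi (pscale c p) = c *: qpi p.
Proof. by rewrite /GRing.scale /= rscaleE. Qed.
Lemma qpi0 : qpi (pzero K) = 0. Proof. by []. Qed.
Lemma qpi1 : qpi (pone K) = 1. Proof. by []. Qed.
Lemma qpiB p q : qpi (psub p q) = qpi p - qpi q.
Proof. by rewrite /psub qpiD qpiZ scaleN1r. Qed.

Lemma rscalerAl c (a b : RR) : c *: (a * b) = (c *: a) * b.
Proof. by elim/qpiW: a => p; elim/qpiW: b => q; rewrite -[c *: qpi p]qpiZ -qpiM -qpiM -qpiZ; ppeq pmulZl. Qed.
Lemma rscalerAr c (a b : RR) : c *: (a * b) = a * (c *: b).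
Proof. by elim/qpiW: a => p; elim/qpiW: b => q; rewrite -[c *: qpi q]qpiZ -qpiM -qpiM -qpiZ; ppeq pmulZr. Qed.

Lemma inI_qpi p : inI p -> qpi p = 0.
Proof. move=> h; apply/qpiP; apply: (I_peq h); coefs. Qed.

Lemma qpi_inI p q : qpi p = qpi q -> inI (psub p q).
Proof. by move/qpiP. Qed.

End Quot.

Section Rels.
Variable K : fieldType.
Local Notation fpoly := (fpoly K).
Local Notation R := (RR K).
Implicit Types p q r : fpoly.

Definition renv (fy fz : nat -> nat) (x : var) : var :=
  (x.1, if x.1 then fz x.2 else fy x.2).

Definition rename fy fz p : fpoly := [seq (t.1, map (renv fy fz) t.2) | t <- p].

Lemma rename_add fy fz p q : rename fy fz (padd p q) = padd (rename fy fz p) (rename fy fz q).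
Proof. by rewrite /rename /padd map_cat. Qed.
Lemma rename_scale fy fz c p : rename fy fz (pscale c p) = pscale c (rename fy fz p).
Proof. by rewrite /rename /pscale -!map_comp. Qed.
Lemma rename_mul fy fz p q : rename fy fz (pmul p q) = pmul (rename fy fz p) (rename fy fz q).
Proof.
rewrite /rename /pmul; elim: p => //= a p IH; rewrite map_cat IH -!map_comp.
by congr (_ ++ _); apply: eq_map => b /=; rewrite map_cat.
Qed.
Lemma rename_sub fy fz p q : rename fy fz (psub p q) = psub (rename fy fz p) (rename fy fz q).
Proof. by rewrite /psub rename_add rename_scale. Qed.
Lemma rename_comm fy fz p q : rename fy fz (comm p q) = comm (rename fy fz p) (rename fy fz q).
Proof. by rewrite /comm rename_sub !rename_mul. Qed.
Lemma rename_jordan fy fz p q : rename fy fz (jordan p q) = jordan (rename fy fz p) (rename fy fz q).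
Proof. by rewrite /jordan rename_add !rename_mul. Qed.
Lemma rename_y fy fz i : rename fy fz (y K i) = y K (fy i).
Proof. by []. Qed.
Lemma rename_z fy fz i : rename fy fz (z K i) = z K (fz i).
Proof. by []. Qed.

Lemma eval_rename fy fz p :
  eval (fun x => pvar K (renv fy fz x)) p = rename fy fz p.
Proof.
have E : forall w, pprod (map (fun x => pvar K (renv fy fz x)) w) = [:: (1, map (renv fy fz) w)].
  by elim=> //= x w ->; rewrite /pmul /= mul1r.
rewrite /eval; elim: p => //= t p IH; rewrite E /= mulr1.
by rewrite /padd /= IH.
Qed.

Lemma graded_ren fy fz : graded_endo (fun x => pvar K (renv fy fz x)).
Proof.
move=> [b i] w; rewrite /coef big_cons big_nil /=.
case E: (_ == w); last by rewrite eqxx.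
move/eqP: E => <- _.
by rewrite /wdeg /renv /=; case: b.
Qed.

Lemma inI_rename fy fz g : inI g -> inI (rename fy fz g).
Proof. by move=> h; rewrite -eval_rename; apply: I_endo => //; apply: graded_ren. Qed.

Definition Y i : R := qpi (y K i).
Definition Z i : R := qpi (z K i).
Definition cm (a b : R) := a * b - b * a.
Definition jr (a b : R) := a * b + b * a.

Lemma qpi_comm p q : qpi (comm p q) = cm (qpi p) (qpi q).
Proof. by rewrite /comm qpiB !qpiM. Qed.
Lemma qpi_jordan p q : qpi (jordan p q) = jr (qpi p) (qpi q).
Proof. by rewrite /jordan qpiD !qpiM. Qed.

Lemma gen0 fy fz g : List.In g (gens K) -> qpi (rename fy fz g) = 0.
Proof. by move=> h; apply: inI_qpi; apply: inI_rename; apply: I_gen. Qed.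

Definition f4 a b c d := fun i : nat => nth 0%N [:: 0%N; a; b; c; d] i.

Ltac genrel g a b c d a' b' c' d' :=
  have := @gen0 (f4 a b c d) (f4 a' b' c' d') g ltac:(rewrite /gens /=; tauto);
  rewrite ?(rename_comm, rename_jordan, rename_sub, rename_add, rename_mul, rename_y, rename_z)
    ?(qpi_comm, qpi_jordan, qpiB, qpiD, qpiM); cbv beta iota delta [f4 nth].

Lemma rel1 a b c : cm (cm (Y a) (Y b)) (Y c) = 0.
Proof. by genrel (comm (comm (y K 1) (y K 2)) (y K 3)) a b c 0%N 0%N 0%N 0%N 0%N. Qed.
Lemma rel1z a b c : cm (cm (Y a) (Y b)) (Z c) = 0.
Proof. by genrel (comm (comm (y K 1) (y K 2)) (z K 3)) a b 0%N 0%N 0%N 0%N c 0%N. Qed.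
Lemma rel2 a b c : cm (cm (Y a) (Z b)) (Y c) = 0.
Proof. by genrel (comm (comm (y K 1) (z K 2)) (y K 3)) a 0%N c 0%N 0%N b 0%N 0%N. Qed.
Lemma rel3 a b c : jr (cm (Y a) (Z b)) (Z c) = 0.
Proof. by genrel (jordan (comm (y K 1) (z K 2)) (z K 3)) a 0%N 0%N 0%N 0%N b c 0%N. Qed.
Lemma rel4 a b c : cm (jr (Z a) (Z b)) (Z c) = 0.
Proof. by genrel (comm (jordan (z K 1) (z K 2)) (z K 3)) 0%N 0%N 0%N 0%N a b c 0%N. Qed.
Lemma rel5 a b c d : jr (Z a) (Z b) * jr (Z c) (Z d) = jr (Z a) (Z c) * jr (Z b) (Z d).
Proof.
genrel (psub (pmul (jordan (z K 1) (z K 2)) (jordan (z K 3) (z K 4)))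
           (pmul (jordan (z K 1) (z K 3)) (jordan (z K 2) (z K 4)))) 0%N 0%N 0%N 0%N a b c d.
by move/eqP; rewrite subr_eq0 => /eqP.
Qed.
Lemma rel6yy a b c d : cm (Y a) (Y b) * cm (Y c) (Y d) + cm (Y a) (Y c) * cm (Y b) (Y d) = 0.
Proof.
by genrel (padd (pmul (comm (y K 1) (y K 2)) (comm (y K 3) (y K 4)))
            (pmul (comm (y K 1) (y K 3)) (comm (y K 2) (y K 4)))) a b c d 0%N 0%N 0%N 0%N.
Qed.
Lemma rel6yz a b c d : cm (Y a) (Y b) * cm (Y c) (Z d) + cm (Y a) (Y c) * cm (Y b) (Z d) = 0.
Proof.
by genrel (padd (pmul (comm (y K 1) (y K 2)) (comm (y K 3) (z K 4)))
            (pmul (comm (y K 1) (y K 3)) (comm (y K 2) (z K 4)))) a b c 0%N 0%N 0%N 0%N d.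
Qed.
Lemma rel6zy a b c d : cm (Z a) (Y b) * cm (Y c) (Y d) + cm (Z a) (Y c) * cm (Y b) (Y d) = 0.
Proof.
by genrel (padd (pmul (comm (z K 1) (y K 2)) (comm (y K 3) (y K 4)))
            (pmul (comm (z K 1) (y K 3)) (comm (y K 2) (y K 4)))) 0%N b c d a 0%N 0%N 0%N.
Qed.
Lemma rel6zz a b c d : cm (Z a) (Y b) * cm (Y c) (Z d) + cm (Z a) (Y c) * cm (Y b) (Z d) = 0.
Proof.
by genrel (padd (pmul (comm (z K 1) (y K 2)) (comm (y K 3) (z K 4)))
            (pmul (comm (z K 1) (y K 3)) (comm (y K 2) (z K 4)))) 0%N b c 0%N a 0%N 0%N d.
Qed.
Lemma rel7 a b c d : cm (Y a) (Z b) * jr (Z c) (Z d) = cm (Y a) (Z c) * jr (Z b) (Z d).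
Proof.
genrel (psub (pmul (comm (y K 1) (z K 2)) (jordan (z K 3) (z K 4)))
           (pmul (comm (y K 1) (z K 3)) (jordan (z K 2) (z K 4)))) a 0%N 0%N 0%N 0%N b c d.
by move/eqP; rewrite subr_eq0 => /eqP.
Qed.

End Rels.

Section Derived.
Variable K : fieldType.
Local Notation R := (RR K).
Local Notation Y := (@Y K).
Local Notation Z := (@Z K).

Lemma cm0 (x y : R) : cm x y = 0 -> x * y = y * x.
Proof. by move/eqP; rewrite subr_eq0 => /eqP. Qed.
Lemma jr0 (x y : R) : jr x y = 0 -> x * y = - (y * x).
Proof. by move/eqP; rewrite addr_eq0 => /eqP. Qed.

Lemma yy_Y a b c : cm (Y a) (Y b) * Y c = Y c * cm (Y a) (Y b).
Proof. exact/cm0/rel1. Qed.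
Lemma yy_Z a b c : cm (Y a) (Y b) * Z c = Z c * cm (Y a) (Y b).
Proof. exact/cm0/rel1z. Qed.
Lemma yz_Y a b c : cm (Y a) (Z b) * Y c = Y c * cm (Y a) (Z b).
Proof. exact/cm0/rel2. Qed.
Lemma yz_Z a b c : cm (Y a) (Z b) * Z c = - (Z c * cm (Y a) (Z b)).
Proof. exact/jr0/rel3. Qed.
Lemma jr_Z a b c : jr (Z a) (Z b) * Z c = Z c * jr (Z a) (Z b).
Proof. exact/cm0/rel4. Qed.

Lemma cmE (x y : R) : x * y = cm x y + y * x.
Proof. by rewrite /cm subrK. Qed.

Lemma zperm (V : zmodType) (p q t s : V) : t + s = - p + (q + t) + (- q + (p + s)).
Proof. by rewrite addrACA [(q + t) + _]addrACA -opprD [q + p]addrC addKr. Qed.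

Lemma jr_Y a b c : jr (Z a) (Z b) * Y c = Y c * jr (Z a) (Z b).
Proof.
have Ha := yz_Z c a b; have Hb := yz_Z c b a.
have eA := cmE (Y c) (Z a); have eB := cmE (Y c) (Z b).
move: Ha Hb eA eB; set Wa := cm (Y c) (Z a); set Wb := cm (Y c) (Z b).
clearbody Wa Wb => Ha Hb eA eB.
rewrite /jr mulrDr !mulrA eA eB !mulrDl -!mulrA eA eB !mulrDr !mulrA Ha Hb.
exact: zperm.
Qed.

Lemma yz_anti a b c d : cm (Y a) (Z b) * cm (Y c) (Z d) = - (cm (Y c) (Z d) * cm (Y a) (Z b)).
Proof.
have hY := yz_Y a b c; have hZ := yz_Z a b d.
move: hY hZ; set A := cm (Y a) (Z b); clearbody A => hY hZ.
rewrite /cm mulrBr mulrBl !mulrA hY hZ -[Y c * A * Z d]mulrA hZ mulrN mulNr opprK -[Z d * A * Y c]mulrA hY !mulrA opprB.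
by rewrite addrC.
Qed.

Lemma yzyz_y x u w v : cm (Y x) (Z u) * cm (Y w) (Z v) = - (cm (Y w) (Z u) * cm (Y x) (Z v)).
Proof.
have := @rel6zz K u x w v; rewrite /cm -!/(cm _ _).
have E : forall p q : R, cm p q = - cm q p by move=> p q; rewrite /cm opprB.
rewrite (E (Z u) (Y x)) (E (Z u) (Y w)) !mulNr.
by move/eqP; rewrite -opprD oppr_eq0 addr_eq0 => /eqP.
Qed.

Lemma yzyz_z x u w v : cm (Y x) (Z u) * cm (Y w) (Z v) = cm (Y x) (Z v) * cm (Y w) (Z u).
Proof. by rewrite yzyz_y yz_anti opprK. Qed.

Lemma yyyy a b c d : cm (Y a) (Y b) * cm (Y c) (Y d) = - (cm (Y a) (Y c) * cm (Y b) (Y d)).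
Proof. by move/eqP: (@rel6yy K a b c d); rewrite addr_eq0 => /eqP. Qed.

Lemma yyyz a b c d : cm (Y a) (Y b) * cm (Y c) (Z d) = - (cm (Y a) (Y c) * cm (Y b) (Z d)).
Proof. by move/eqP: (@rel6yz K a b c d); rewrite addr_eq0 => /eqP. Qed.

Lemma cmN (p q : R) : cm p q = - cm q p.
Proof. by rewrite /cm opprB. Qed.

Lemma jrC (p q : R) : jr p q = jr q p.
Proof. by rewrite /jr addrC. Qed.

End Derived.

Section Prods.
Variable R : pzRingType.
Implicit Types F G : nat -> R.

Lemma prod_at1 F G n i0 : (i0 < n)%N -> (forall i, (i < n)%N -> i != i0 -> F i = G i) ->
  \prod_(0 <= i < n) F i =
  (\prod_(0 <= i < i0) G i) * (F i0 * \prod_(i0.+1 <= i < n) G i).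
Proof.
move=> lt E; rewrite (@big_cat_nat _ _ _ i0) //=; last exact: ltnW.
rewrite (big_ltn lt); congr (_ * (_ * _)); apply: eq_big_nat => i /andP[h1 h2];
  apply: E; lia.
Qed.

Lemma prod_at2 F G n i0 : (i0.+1 < n)%N ->
  (forall i, (i < n)%N -> i != i0 -> i != i0.+1 -> F i = G i) ->
  \prod_(0 <= i < n) F i =
  (\prod_(0 <= i < i0) G i) * ((F i0 * F i0.+1) * \prod_(i0.+2 <= i < n) G i).
Proof.
move=> lt E; rewrite (@big_cat_nat _ _ _ i0) //=; last lia.
rewrite (@big_ltn _ _ _ i0 n); last lia.
rewrite (big_ltn lt) -[in RHS]mulrA; congr (_ * (_ * (_ * _))); apply: eq_big_nat => i /andP[h1 h2];
  apply: E; lia.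
Qed.

Lemma prod_neg1 F G n i0 : (i0 < n)%N -> (forall i, (i < n)%N -> i != i0 -> F i = G i) ->
  F i0 = - G i0 -> \prod_(0 <= i < n) F i = - \prod_(0 <= i < n) G i.
Proof.
move=> lt E E0; rewrite (prod_at1 lt E) (@prod_at1 G G _ _ lt) // E0.
by rewrite mulNr mulrN.
Qed.

Lemma prod_neg2 F G n i0 : (i0.+1 < n)%N ->
  (forall i, (i < n)%N -> i != i0 -> i != i0.+1 -> F i = G i) ->
  F i0 * F i0.+1 = - (G i0 * G i0.+1) -> \prod_(0 <= i < n) F i = - \prod_(0 <= i < n) G i.
Proof.
move=> lt E E0; rewrite (prod_at2 lt E) (@prod_at2 G G _ _ lt) // E0.
by rewrite mulNr mulrN.
Qed.

Lemma prod_eq2 F G n i0 : (i0.+1 < n)%N ->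
  (forall i, (i < n)%N -> i != i0 -> i != i0.+1 -> F i = G i) ->
  F i0 * F i0.+1 = G i0 * G i0.+1 -> \prod_(0 <= i < n) F i = \prod_(0 <= i < n) G i.
Proof.
by move=> lt E E0; rewrite (prod_at2 lt E) (@prod_at2 G G _ _ lt) // E0.
Qed.

End Prods.

Section Hf.
Variable K : fieldType.
Local Notation R := (RR K).
Local Notation Y := (@Y K).
Local Notation Z := (@Z K).

Definition fac (m n : nat) (fi fj : nat -> nat) (i : nat) : R :=
  if (i < m)%N then cm (Y (fi (2 * i)%N)) (Y (fi (2 * i).+1))
  else if (i < m + n)%N then cm (Y (fi (m + i)%N)) (Z (fj (i - m)%N))
  else jr (Z (fj (2 * i - 2 * m - n)%N)) (Z (fj (2 * i - 2 * m - n).+1)).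

Definition Hf m n r fi fj : R := \prod_(0 <= i < m + n + r) fac m n fi fj i.

Lemma facY m n fi fj i : (i < m)%N -> fac m n fi fj i = cm (Y (fi (2 * i)%N)) (Y (fi (2 * i).+1)).
Proof. by move=> h; rewrite /fac h. Qed.
Lemma facYZ m n fi fj i : (m <= i < m + n)%N -> fac m n fi fj i = cm (Y (fi (m + i)%N)) (Z (fj (i - m)%N)).
Proof. by move=> /andP[h1 h2]; rewrite /fac ltnNge h1 /= h2. Qed.
Lemma facJ m n fi fj i : (m + n <= i)%N ->
  fac m n fi fj i = jr (Z (fj (2 * i - 2 * m - n)%N)) (Z (fj (2 * i - 2 * m - n).+1)).
Proof. by move=> h; rewrite /fac ifF ?ifF //; lia. Qed.

Lemma eq_Hf m n r fi fj fi' fj' :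
  (forall k, (k < 2 * m + n)%N -> fi k = fi' k) ->
  (forall k, (k < n + 2 * r)%N -> fj k = fj' k) ->
  Hf m n r fi fj = Hf m n r fi' fj'.
Proof.
move=> Ei Ej; apply: eq_big_nat => i /andP[_ hi].
case: (ltnP i m) => h1; first by rewrite !facY // !Ei //; lia.
case: (ltnP i (m + n)) => h2.
  by rewrite !facYZ ?Ei ?Ej //; lia.
by rewrite !facJ // !Ej //; lia.
Qed.

Definition swapf (f : nat -> nat) (p : nat) (k : nat) : nat :=
  if k == p then f p.+1 else if k == p.+1 then f p else f k.

Lemma swapf_o f p k : k != p -> k != p.+1 -> swapf f p k = f k.
Proof. by rewrite /swapf => /negbTE -> /negbTE ->. Qed.
Lemma swapf_p f p : swapf f p p = f p.+1.
Proof. by rewrite /swapf eqxx. Qed.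
Lemma swapf_p1 f p : swapf f p p.+1 = f p.
Proof. by rewrite /swapf ifF ?eqxx //; lia. Qed.

Lemma nth_catr (a s : seq nat) j : nth 0%N (a ++ s) (size a + j) = nth 0%N s j.
Proof. by rewrite nth_cat ltnNge leq_addr /= addKn. Qed.

Lemma nth_swap (a b : seq nat) x y :
  nth 0%N (a ++ y :: x :: b) =1 swapf (nth 0%N (a ++ x :: y :: b)) (size a).
Proof.
move=> k; rewrite /swapf.
case: (ltnP k (size a)) => h.
  by rewrite ifF ?ifF ?nth_cat ?h //; lia.
have [j ->] : exists j, k = (size a + j)%N by exists (k - size a)%N; lia.
rewrite nth_catr.
case: j => [|[|j]].
- by rewrite addn0 eqxx -[(size a).+1]addn1 nth_catr.
- rewrite ifF; last lia.
  by rewrite addn1 eqxx -[size a]addn0 nth_catr.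
- by rewrite ifF ?ifF ?nth_catr //; lia.
Qed.

Lemma even_odd p : exists a, p = (2 * a)%N \/ p = (2 * a).+1.
Proof.
elim: p => [|p [a [->|->]]]; first by exists 0%N; left.
  by exists a; right.
by exists a.+1; left; lia.
Qed.


Lemma HswapI m n r fi fj p : (p.+1 < 2 * m + n)%N ->
  Hf m n r (swapf fi p) fj = - Hf m n r fi fj.
Proof.
move=> hp; rewrite /Hf.
case: (ltnP p (2 * m)) => hpm.
  have [a0 [ea|ea]] := even_odd p; subst p.
  - apply: (@prod_neg1 _ _ _ _ a0); first lia.
      move=> i hi ne; case: (ltnP i m) => h1.
        by rewrite !facY // !swapf_o //; sl.
      case: (ltnP i (m + n)) => h2.
        by rewrite !facYZ ?swapf_o //; sl.
      by rewrite !facJ.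
    by rewrite !facY; sl; rewrite swapf_p swapf_p1 cmN.
  - apply: (@prod_neg2 _ _ _ _ a0); first lia.
      move=> i hi ne ne1; case: (ltnP i m) => h1.
        by rewrite !facY // !swapf_o //; sl.
      case: (ltnP i (m + n)) => h2.
        by rewrite !facYZ ?swapf_o //; sl.
      by rewrite !facJ.
    rewrite (@facY m n _ _ a0) ?(@facY m n _ _ a0); sl.
    rewrite swapf_o; sl; rewrite swapf_p.
    case: (ltnP a0.+1 m) => h3.
      rewrite (@facY m n _ _ a0.+1) // (@facY m n _ _ a0.+1) //.
      rewrite (_ : (2 * a0.+1)%N = (2 * a0).+2); last lia.
      rewrite swapf_p1 swapf_o; sl; by rewrite yyyy.
    have em : m = a0.+1 by lia.
    subst m; rewrite (@facYZ a0.+1 n _ _ a0.+1) ?(@facYZ a0.+1 n _ _ a0.+1); sl.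
    rewrite (_ : (a0.+1 + a0.+1)%N = (2 * a0).+2); last lia.
    by rewrite swapf_p1 subnn yyyz.
have [i0 ei0] : exists i0, p = (m + i0)%N by exists (p - m)%N; lia.
apply: (@prod_neg2 _ _ _ _ i0); first lia.
  move=> i hi ne ne1; case: (ltnP i m) => h1.
    by rewrite !facY // !swapf_o //; sl.
  case: (ltnP i (m + n)) => h2.
    by rewrite !facYZ ?swapf_o //; sl.
  by rewrite !facJ.
rewrite !facYZ; sl; rewrite -ei0 swapf_p addnS -ei0 swapf_p1.
by rewrite yzyz_y (_ : (i0.+1 - m)%N = (i0 - m).+1) //; sl.
Qed.

Lemma HswapJ m n r fi fj p : (p.+1 < n + 2 * r)%N ->
  Hf m n r fi (swapf fj p) = Hf m n r fi fj.
Proof.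
move=> hp; rewrite /Hf.
case: (ltnP p.+1 n) => hpn.
  apply: (@prod_eq2 _ _ _ _ (m + p)%N); first lia.
    move=> i hi ne ne1; case: (ltnP i m) => h1; first by rewrite !facY.
    case: (ltnP i (m + n)) => h2.
      by rewrite !facYZ ?swapf_o //; sl.
    by rewrite !facJ // !swapf_o //; sl.
  rewrite (@facYZ m n _ _ (m + p)%N) ?(@facYZ m n _ _ (m + p)%N); sl.
  rewrite (@facYZ m n _ _ (m + p).+1) ?(@facYZ m n _ _ (m + p).+1); sl.
  rewrite (_ : (m + p - m)%N = p); last lia.
  rewrite (_ : ((m + p).+1 - m)%N = p.+1); last lia.
  by rewrite swapf_p swapf_p1 yzyz_z.
case: (ltnP p n) => hpn2.
  have ep : p.+1 = n by lia.
  apply: (@prod_eq2 _ _ _ _ (m + p)%N); first lia.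
    move=> i hi ne ne1; case: (ltnP i m) => h1; first by rewrite !facY.
    case: (ltnP i (m + n)) => h2.
      by rewrite !facYZ ?swapf_o //; sl.
    by rewrite !facJ // !swapf_o //; sl.
  rewrite (@facYZ m n _ _ (m + p)%N) ?(@facYZ m n _ _ (m + p)%N); sl.
  rewrite (@facJ m n _ _ (m + p).+1) ?(@facJ m n _ _ (m + p).+1); sl.
  rewrite (_ : (m + p - m)%N = p); last lia.
  rewrite (_ : (2 * (m + p).+1 - 2 * m - n)%N = p.+1); last lia.
  rewrite swapf_p swapf_p1 swapf_o; sl; by rewrite rel7.
have [c0 [ec|ec]] := even_odd (p - n)%N.
  apply: eq_big_nat => i /andP[_ hi].
  case: (ltnP i m) => h1; first by rewrite !facY.
  case: (ltnP i (m + n)) => h2.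
    by rewrite !facYZ ?swapf_o //; sl.
  rewrite !facJ //.
  case: (eqVneq i (m + n + c0)%N) => [->|ne].
    rewrite (_ : (2 * (m + n + c0) - 2 * m - n)%N = p); last lia.
    by rewrite swapf_p swapf_p1 jrC.
  by rewrite !swapf_o //; sl.
apply: (@prod_eq2 _ _ _ _ (m + n + c0)%N); first lia.
  move=> i hi ne ne1; case: (ltnP i m) => h1; first by rewrite !facY.
  case: (ltnP i (m + n)) => h2.
    by rewrite !facYZ ?swapf_o //; sl.
  by rewrite !facJ // !swapf_o //; sl.
rewrite (@facJ m n _ _ (m + n + c0)%N) ?(@facJ m n _ _ (m + n + c0)%N); sl.
rewrite (@facJ m n _ _ (m + n + c0).+1) ?(@facJ m n _ _ (m + n + c0).+1); sl.
rewrite (_ : (2 * (m + n + c0) - 2 * m - n).+1 = p); last lia.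
rewrite (_ : (2 * (m + n + c0).+1 - 2 * m - n)%N = p.+1); last lia.
rewrite swapf_p swapf_p1 !swapf_o; sl; by rewrite rel5.
Qed.

End Hf.

Section Sorting.
Variable K : fieldType.
Hypothesis hchar : (2%:R : K) != 0.
Local Notation R := (RR K).

Lemma self_neg (a : R) : a = - a -> a = 0.
Proof.
move=> h; have h2 : (2%:R : K) *: a = 0.
  by rewrite -[2%:R]/(1 + 1) scalerDl scale1r {1}h addNr.
by rewrite -[a]scale1r -(mulVf hchar) -scalerA h2 scaler0.
Qed.

Lemma perm_swap2 (x y : nat) t : perm_eq (x :: y :: t) (y :: x :: t).
Proof. by apply/permP => p /=; rewrite addnCA. Qed.

Section Alt.
Variable F : seq nat -> R.
Variable L : nat.
Hypothesis HF : forall a x y b, size (a ++ x :: y :: b) = L ->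
  F (a ++ y :: x :: b) = - F (a ++ x :: y :: b).

Lemma alt_ins b : forall a x, sorted ltn b -> size (a ++ x :: b) = L ->
  F (a ++ x :: b) = 0 \/ exists c b', F (a ++ x :: b) = c *: F (a ++ b') /\
     sorted ltn b' /\ perm_eq (x :: b) b'.
Proof.
elim: b => [|y t IH] a x sb hs.
  by right; exists 1, [:: x]; rewrite scale1r.
case: (ltngtP x y) => hxy.
- by right; exists 1, [:: x, y & t]; rewrite scale1r /= hxy.
- have hs' : size ((rcons a y) ++ x :: t) = L by move: hs; rewrite !size_cat /= size_rcons; lia.
  have st : sorted ltn t by move: sb; rewrite /= => /path_sorted.
  have hsw : size (a ++ y :: x :: t) = L by move: hs; rewrite !size_cat.
  rewrite (HF hsw).
  have := IH (rcons a y) x st hs'; rewrite cat_rcons => -[h0|[c [b' [E [sb' pb']]]]].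
    by left; rewrite h0 oppr0.
  right; exists (- c), (y :: b'); split.
    by rewrite E cat_rcons scaleNr.
  split; last by rewrite (perm_trans (perm_swap2 _ _ _)) // perm_cons.
  rewrite /= (path_sortedE ltn_trans) sb' andbT -(perm_all _ pb') /= hxy /=.
  by move: sb; rewrite /= (path_sortedE ltn_trans) => /andP[].
- subst y; left; apply: self_neg; exact: HF.
Qed.

Lemma alt_sort b : forall a, size (a ++ b) = L ->
  F (a ++ b) = 0 \/ exists c b', F (a ++ b) = c *: F (a ++ b') /\
     sorted ltn b' /\ perm_eq b b'.
Proof.
elim: b => [|x t IH] a hs.
  by right; exists 1, [::]; rewrite scale1r.
have hs' : size (rcons a x ++ t) = L by rewrite cat_rcons.
have := IH _ hs'; rewrite !cat_rcons => -[h0|[c [t' [E [st pt]]]]]; first by left.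
rewrite cat_rcons in E.
have hs2 : size (a ++ x :: t') = L by move: hs; rewrite !size_cat /= (perm_size pt).
have := alt_ins st hs2 => -[h0|[c' [b' [E' [sb pb]]]]].
  by left; rewrite E h0 scaler0.
right; exists (c * c'), b'; split; first by rewrite E E' scalerA.
by split=> //; apply: perm_trans pb; rewrite perm_cons.
Qed.

Lemma alt_sort0 s : size s = L ->
  F s = 0 \/ exists c s', F s = c *: F s' /\ sorted ltn s' /\ size s' = L.
Proof.
move=> hs; have := @alt_sort s [::] hs => -[h|[c [s' [E [ss ps]]]]]; first by left.
by right; exists c, s'; do !split => //; rewrite -(perm_size ps).
Qed.
End Alt.

Section Sym.
Variable F : seq nat -> R.
Variable L : nat.
Hypothesis HF : forall a x y b, size (a ++ x :: y :: b) = L ->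
  F (a ++ y :: x :: b) = F (a ++ x :: y :: b).

Lemma sym_ins b : forall a x, sorted leq b -> size (a ++ x :: b) = L ->
  exists b', F (a ++ x :: b) = F (a ++ b') /\ sorted leq b' /\ perm_eq (x :: b) b'.
Proof.
elim: b => [|y t IH] a x sb hs; first by exists [:: x].
case: (leqP x y) => hxy.
  by exists [:: x, y & t]; rewrite /= hxy.
have hs' : size ((rcons a y) ++ x :: t) = L by move: hs; rewrite !size_cat /= size_rcons; lia.
have st : sorted leq t by move: sb; rewrite /= => /path_sorted.
have := IH (rcons a y) x st hs'; rewrite cat_rcons => -[b' [E [sb' pb']]].
exists (y :: b'); split.
  have hsw : size (a ++ y :: x :: t) = L by move: hs; rewrite !size_cat.
  by rewrite (HF hsw) E cat_rcons.
split; last by rewrite (perm_trans (perm_swap2 _ _ _)) // perm_cons.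
rewrite /= (path_sortedE leq_trans) sb' andbT -(perm_all _ pb') /= (ltnW hxy) /=.
by move: sb; rewrite /= (path_sortedE leq_trans) => /andP[].
Qed.

Lemma sym_sort b : forall a, size (a ++ b) = L ->
  exists b', F (a ++ b) = F (a ++ b') /\ sorted leq b' /\ perm_eq b b'.
Proof.
elim: b => [|x t IH] a hs; first by exists [::].
have hs' : size (rcons a x ++ t) = L by rewrite cat_rcons.
have := IH _ hs'; rewrite !cat_rcons => -[t' [E [st pt]]].
rewrite cat_rcons in E.
have hs2 : size (a ++ x :: t') = L by move: hs; rewrite !size_cat /= (perm_size pt).
have := sym_ins st hs2 => -[b' [E' [sb pb]]].
exists b'; split; first by rewrite E E'.
by split=> //; apply: perm_trans pb; rewrite perm_cons.
Qed.

Lemma sym_sort0 s : size s = L ->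
  exists s', F s = F s' /\ sorted leq s' /\ size s' = L.
Proof.
move=> hs; have := @sym_sort s [::] hs => -[s' [E [ss ps]]].
by exists s'; do !split => //; rewrite -(perm_size ps).
Qed.
End Sym.
End Sorting.

Section Link.
Variable K : fieldType.
Local Notation R := (RR K).
Local Notation Y := (@Y K).
Local Notation Z := (@Z K).
Local Notation Hf := (@Hf K).
Local Notation fac := (@fac K).


Lemma Hf_split m n r fi fj : Hf m n r fi fj =
  (\prod_(0 <= a < m) cm (Y (fi (2 * a)%N)) (Y (fi (2 * a).+1))) *
  ((\prod_(0 <= b < n) cm (Y (fi (2 * m + b)%N)) (Z (fj b))) *
   (\prod_(0 <= c < r) jr (Z (fj (n + 2 * c)%N)) (Z (fj (n + 2 * c).+1)))).
Proof.
rewrite /Hf (@big_cat_nat _ _ _ (m + n)) //=; last lia.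
rewrite (@big_cat_nat _ _ _ m) //=; last lia.
rewrite -mulrA; congr (_ * (_ * _)).
- by apply: eq_big_nat => i /andP[_ h]; rewrite facY.
- rewrite -{1}[m]add0n big_addn addKn; apply: eq_big_nat => i /andP[_ h].
  rewrite facYZ; sl; rewrite addnK (_ : (m + (i + m))%N = (2 * m + i)%N) //; lia.
- rewrite -{1}[(m + n)%N]add0n big_addn (_ : (m + n + r - (m + n) = r)%N); last lia.
  apply: eq_big_nat => i /andP[_ h].
  rewrite facJ; sl; rewrite (_ : (2 * (i + (m + n)) - 2 * m - n)%N = (n + 2 * i)%N) //; lia.
Qed.

Lemma qpi_pprod (l : seq (fpoly K)) : qpi (pprod l) = \prod_(f <- l) qpi f.
Proof. by elim: l => [|f l IH]; rewrite ?big_nil ?big_cons //= qpiM IH. Qed.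

Definition Zt (ks : seq nat) : R := \prod_(k <- ks) Z k.

Definition G (d : gdata) : R :=
  Hf (gm d) (gn d) (gr d) (nth 0%N (gi d)) (nth 0%N (gj d)) * Zt (gk d).

Lemma qpi_gK d : qpi (gK K d) = G d.
Proof.
rewrite /gK /hpoly /G /Zt !qpiM !qpi_pprod !big_map Hf_split.
rewrite /index_iota !subn0.
under eq_bigr => a _ do rewrite qpi_comm.
under [X in _ * (X * _) * _]eq_bigr => a _ do rewrite qpi_comm.
under [X in _ * (_ * X) * _]eq_bigr => a _ do rewrite qpi_jordan.
reflexivity.
Qed.

Inductive Sp : R -> Prop :=
| Sp0 : Sp 0
| SpD a b : Sp a -> Sp b -> Sp (a + b)
| SpZ c a : Sp a -> Sp (c *: a)
| SpG d : admissible d -> Sp (G d).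

Lemma SpN a : Sp a -> Sp (- a).
Proof. by move=> h; rewrite -scaleN1r; apply: SpZ. Qed.

Lemma Sp_sign k a : Sp a -> Sp ((-1) ^+ k * a).
Proof. by move=> h; rewrite -signr_odd; case: (odd k); rewrite ?expr1 ?expr0 ?mulN1r ?mul1r //; apply: SpN. Qed.


Lemma H1 m n r ii fj a b : cm (Y a) (Y b) * Hf m n r (nth 0%N ii) fj =
  Hf m.+1 n r (nth 0%N [:: a, b & ii]) fj.
Proof.
rewrite !Hf_split big_nat_recl // muln0 -mulrA; congr (_ * (_ * (_ * _))).
- apply: eq_big_nat => i _; rewrite (_ : (2 * i.+1)%N = (2 * i).+2) //; sl.
- apply: eq_big_nat => i _; rewrite (_ : (2 * m.+1 + i)%N = (2 * m + i).+2) //; sl.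
Qed.

Lemma comm_yy_yz a b c d : GRing.comm (cm (Y c) (Y d)) (cm (Y a) (Z b)).
Proof.
apply: commrB; apply: commrM; rewrite /GRing.comm ?yy_Y ?yy_Z //.
Qed.

Lemma H2 m n r ii js a b : (2 * m <= size ii)%N ->
  cm (Y a) (Z b) * Hf m n r (nth 0%N ii) (nth 0%N js) =
  Hf m n.+1 r (nth 0%N (take (2 * m) ii ++ a :: drop (2 * m) ii)) (nth 0%N (b :: js)).
Proof.
move=> hs; rewrite !Hf_split big_nat_recl //.
have hst : size (take (2 * m) ii) = (2 * m)%N by rewrite size_takel.
have C : GRing.comm (cm (Y a) (Z b))
   (\prod_(0 <= a0 < m) cm (Y (nth 0%N ii (2 * a0)%N)) (Y (nth 0%N ii (2 * a0).+1))).
  by apply: commr_prod => i _; apply: commr_sym; apply: comm_yy_yz.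
rewrite mulrA C -!mulrA; congr (_ * (_ * (_ * _))).
- apply: eq_big_nat => i /andP[_ h]; rewrite !nth_cat hst ifT ?ifT ?nth_take //; sl.
- by rewrite addn0 nth_cat hst ltnn subnn.
- apply: eq_big_nat => i _; rewrite nth_cat hst ifF; sl.
  by rewrite (_ : (2 * m + i.+1 - 2 * m)%N = i.+1) /= ?nth_drop //; sl.
Qed.

Lemma H3 m n r fi js u v : size js = (n + 2 * r)%N ->
  Hf m n r fi (nth 0%N js) * jr (Z u) (Z v) = Hf m n r.+1 fi (nth 0%N (js ++ [:: u; v])).
Proof.
move=> hs; rewrite !Hf_split big_nat_recr //= -!mulrA; congr (_ * (_ * _)).
  by apply: eq_big_nat => i /andP[_ h]; rewrite nth_cat ifT //; sl.
congr (_ * _).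
  apply: eq_big_nat => i /andP[_ h]; rewrite !nth_cat ifT ?ifT //; sl.
by rewrite !nth_cat hs ltnn subnn ifF ?subSn ?subnn //; sl.
Qed.

Lemma Hf_swapI m n r js a x y b : size (a ++ x :: y :: b) = (2 * m + n)%N ->
  Hf m n r (nth 0%N (a ++ y :: x :: b)) (nth 0%N js) =
  - Hf m n r (nth 0%N (a ++ x :: y :: b)) (nth 0%N js).
Proof.
move=> hs; have hp : ((size a).+1 < 2 * m + n)%N by move: hs; rewrite size_cat /=; lia.
rewrite -(@HswapI _ m n r _ _ (size a) hp).
by apply: eq_Hf => k _ //; first [apply: nth_swap | symmetry; apply: nth_swap].
Qed.

Lemma Hf_swapJ m n r fi a x y b : size (a ++ x :: y :: b) = (n + 2 * r)%N ->
  Hf m n r fi (nth 0%N (a ++ y :: x :: b)) =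
  Hf m n r fi (nth 0%N (a ++ x :: y :: b)).
Proof.
move=> hs; have hp : ((size a).+1 < n + 2 * r)%N by move: hs; rewrite size_cat /=; lia.
rewrite -(@HswapJ _ m n r fi _ (size a) hp).
by apply: eq_Hf => k _ //; first [apply: nth_swap | symmetry; apply: nth_swap].
Qed.

End Link.

Section Norm.
Variable K : fieldType.
Hypothesis hchar : (2%:R : K) != 0.
Local Notation R := (RR K).
Local Notation Y := (@Y K).
Local Notation Z := (@Z K).
Local Notation Hf := (@Hf K).
Local Notation Zt := (@Zt K).
Local Notation G := (@G K).
Local Notation Sp := (@Sp K).


Lemma sortI m n r q js ks s : size s = (2 * m + n)%N ->
  size js = (n + 2 * r)%N -> sorted leq js -> size ks = q -> sorted ltn ks ->
  Sp (Hf m n r (nth 0%N s) (nth 0%N js) * Zt ks).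
Proof.
move=> hs hj sj hk sk.
pose F := fun s => Hf m n r (nth 0%N s) (nth 0%N js) * Zt ks.
have HF : forall a x y b, size (a ++ x :: y :: b) = (2 * m + n)%N ->
    F (a ++ y :: x :: b) = - F (a ++ x :: y :: b).
  by move=> a x y b h; rewrite /F Hf_swapI // mulNr.
have := alt_sort0 hchar HF hs => -[h0|[c [s' [E [ss sz]]]]].
  by rewrite -/(F s) h0; apply: Sp0.
rewrite -/(F s) E; apply: SpZ.
by apply: (@SpG _ (GData m n r q s' js ks)); do !split.
Qed.

Lemma sortJ m n r q ii js ks : size ii = (2 * m + n)%N -> sorted ltn ii ->
  size js = (n + 2 * r)%N -> size ks = q -> sorted ltn ks ->
  Sp (Hf m n r (nth 0%N ii) (nth 0%N js) * Zt ks).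
Proof.
move=> hi si hj hk sk.
pose F := fun s => Hf m n r (nth 0%N ii) (nth 0%N s) * Zt ks.
have HF : forall a x y b, size (a ++ x :: y :: b) = (n + 2 * r)%N ->
    F (a ++ y :: x :: b) = F (a ++ x :: y :: b).
  by move=> a x y b h; rewrite /F Hf_swapJ.
have := sym_sort0 hchar HF hj => -[s' [E [ss sz]]].
rewrite -/(F js) E.
by apply: (@SpG _ (GData m n r q ii s' ks)); do !split.
Qed.

Lemma sortIJ m n r q ii js ks : size ii = (2 * m + n)%N ->
  size js = (n + 2 * r)%N -> size ks = q -> sorted ltn ks ->
  Sp (Hf m n r (nth 0%N ii) (nth 0%N js) * Zt ks).
Proof.
move=> hi hj hk sk.
pose F := fun s => Hf m n r (nth 0%N s) (nth 0%N js) * Zt ks.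
have HF : forall a x y b, size (a ++ x :: y :: b) = (2 * m + n)%N ->
    F (a ++ y :: x :: b) = - F (a ++ x :: y :: b).
  by move=> a x y b h; rewrite /F Hf_swapI // mulNr.
have := alt_sort0 hchar HF hi => -[h0|[c [s' [E [ss sz]]]]].
  by rewrite -/(F ii) h0; apply: Sp0.
rewrite -/(F ii) E; apply: SpZ.
exact: (sortJ (q := q)).
Qed.

Lemma N1 d a b : admissible d -> Sp (cm (Y a) (Y b) * G d).
Proof.
case: d => m n r q ii js ks [/= si [ssi [sj [ssj [sk ssk]]]]].
rewrite /G /= mulrA H1.
by apply: (sortIJ (q := q)) => //=; rewrite si; lia.
Qed.

Lemma N2 d a b : admissible d -> Sp (cm (Y a) (Z b) * G d).
Proof.
case: d => m n r q ii js ks [/= si [ssi [sj [ssj [sk ssk]]]]].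
rewrite /G /= mulrA H2; last by rewrite si; lia.
apply: (sortIJ (q := q)) => //=.
  by rewrite size_cat size_takel /= ?size_drop ?si; lia.
by rewrite sj; lia.
Qed.

End Norm.

Section N3.
Variable K : fieldType.
Hypothesis hchar : (2%:R : K) != 0.
Local Notation R := (RR K).
Local Notation Y := (@Y K).
Local Notation Z := (@Z K).
Local Notation Hf := (@Hf K).
Local Notation Zt := (@Zt K).
Local Notation G := (@G K).
Local Notation Sp := (@Sp K).


Lemma prod_anti (x : R) (F : nat -> R) n : (forall i, x * F i = - (F i * x)) ->
  x * \prod_(0 <= i < n) F i = ((-1) ^+ n : K) *: (\prod_(0 <= i < n) F i * x).
Proof.
move=> h; elim: n => [|n IH].
  by rewrite big_geq // mulr1 mul1r expr0 scale1r.
rewrite !big_nat_recr //= mulrA IH -rscalerAl -!mulrA h mulrN exprS mulN1r scaleNr.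
by rewrite scalerN.
Qed.

Lemma ZHf c m n r fi fj : Z c * Hf m n r fi fj = ((-1) ^+ n : K) *: (Hf m n r fi fj * Z c).
Proof.
rewrite !Hf_split.
set YY := \prod_(0 <= a < m) _.
set YZ := \prod_(0 <= b < n) _.
set J := \prod_(0 <= c < r) _.
have c1 : GRing.comm (Z c) YY.
  by apply: commr_prod => i _; apply: commr_sym; rewrite /GRing.comm yy_Z.
have c2 : Z c * YZ = ((-1) ^+ n : K) *: (YZ * Z c).
  apply: prod_anti => i; rewrite yz_Z opprK //.
have c3 : GRing.comm (Z c) J.
  by apply: commr_prod => i _; apply: commr_sym; rewrite /GRing.comm jr_Z.
rewrite mulrA c1 -mulrA [Z c * (YZ * J)]mulrA c2 -rscalerAl -rscalerAr -[YZ * Z c * J]mulrA c3.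
by rewrite -!mulrA.
Qed.

Inductive TS (P : pred nat) : R -> Prop :=
| TS0 : TS P 0
| TSD a b : TS P a -> TS P b -> TS P (a + b)
| TSZ (c : K) a : TS P a -> TS P (c *: a)
| TSt ks : sorted ltn ks -> all P ks -> TS P (Zt ks)
| TSj u v ks : sorted ltn ks -> all P ks -> TS P (jr (Z u) (Z v) * Zt ks).

Lemma Zt_cons k ks : Zt (k :: ks) = Z k * Zt ks.
Proof. by rewrite /Zt big_cons. Qed.

Lemma TS_lift (P : pred nat) k x : P k ->
  TS (fun e => (k < e)%N && P e) x -> TS P (Z k * x).
Proof.
move=> Pk; elim=> [|a b _ IHa _ IHb|c a _ IHa|ks sks aks|u v ks sks aks].
- by rewrite mulr0; apply: TS0.
- by rewrite mulrDr; apply: TSD.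
- by rewrite -rscalerAr; apply: TSZ.
- rewrite -Zt_cons; apply: TSt.
    by rewrite /= (path_sortedE ltn_trans) sks andbT; apply: sub_all aks => e /andP[].
  by rewrite /= Pk; apply: sub_all aks => e /andP[].
- rewrite mulrA -jr_Z -mulrA -Zt_cons; apply: TSj.
    by rewrite /= (path_sortedE ltn_trans) sks andbT; apply: sub_all aks => e /andP[].
  by rewrite /= Pk; apply: sub_all aks => e /andP[].
Qed.

Lemma half_jr c : Z c * Z c = ((2%:R : K)^-1) *: jr (Z c) (Z c).
Proof.
have e : Z c * Z c + Z c * Z c = (2%:R : K) *: (Z c * Z c).
  by rewrite -[2%:R]/(1 + 1 : K) scalerDl scale1r.
by rewrite /jr e scalerA mulVf // scale1r.
Qed.

Lemma zt_ins ks : forall c (P : pred nat), sorted ltn ks -> P c -> all P ks ->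
  TS P (Z c * Zt ks).
Proof.
elim: ks => [|k t IH] c P sks Pc aks.
  by rewrite -Zt_cons; apply: TSt => //=; rewrite Pc.
rewrite Zt_cons.
have st : sorted ltn t by move: sks => /= /path_sorted.
have akt : all (fun e => (k < e)%N) t by move: sks; rewrite /= (path_sortedE ltn_trans) => /andP[].
move: aks => /= /andP[Pk aPt].
case: (ltngtP c k) => hck.
- rewrite -!Zt_cons; apply: TSt; last by rewrite /= Pc Pk.
  by rewrite /= hck /= (path_sortedE ltn_trans) akt.
- rewrite mulrA (_ : Z c * Z k = jr (Z c) (Z k) - Z k * Z c); last by rewrite /jr addrK.
  rewrite mulrBl -mulrA -scaleN1r; apply: TSD; first by apply: TSj.
  apply: TSZ; apply: TS_lift => //; apply: IH => //; first by rewrite hck.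
  by rewrite all_predI akt.
- subst c; rewrite mulrA half_jr -rscalerAl; apply: TSZ; exact: TSj.
Qed.

Lemma TS_Sp P m n r ii js x : size ii = (2 * m + n)%N -> sorted ltn ii ->
  size js = (n + 2 * r)%N -> sorted leq js -> TS P x ->
  Sp (Hf m n r (nth 0%N ii) (nth 0%N js) * x).
Proof.
move=> si ssi sj ssj; elim=> [|a b _ IHa _ IHb|c a _ IHa|ks sks aks|u v ks sks aks].
- by rewrite mulr0; apply: Sp0.
- by rewrite mulrDr; apply: SpD.
- by rewrite -rscalerAr; apply: SpZ.
- by apply: (@SpG _ (GData m n r (size ks) ii js ks)); do !split.
- rewrite mulrA H3 //; apply: (sortJ hchar (q := size ks)) => //.
  by rewrite size_cat sj /=; lia.
Qed.

Lemma N3 d c : admissible d -> Sp (Z c * G d).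
Proof.
case: d => m n r q ii js ks [/= si [ssi [sj [ssj [sk ssk]]]]].
rewrite /G /= mulrA ZHf -rscalerAl -mulrA; apply: SpZ.
apply: (TS_Sp (P := predT)) => //.
by apply: zt_ins => //; apply/allP.
Qed.

End N3.

Section Final.
Variable K : fieldType.
Hypothesis hchar : (2%:R : K) != 0.
Local Notation R := (RR K).
Local Notation Y := (@Y K).
Local Notation Z := (@Z K).
Local Notation Hf := (@Hf K).
Local Notation Zt := (@Zt K).
Local Notation G := (@G K).
Local Notation Sp := (@Sp K).

Inductive isG : R -> Prop :=
| GZ c : isG (Z c)
| GYY a b : isG (cm (Y a) (Y b))
| GYZ a b : isG (cm (Y a) (Z b)).

Inductive Wg : R -> Prop :=
| W0 : Wg 0
| W1 : Wg 1
| WD a b : Wg a -> Wg b -> Wg (a + b)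
| WZ (c : K) a : Wg a -> Wg (c *: a)
| WM g a : isG g -> Wg a -> Wg (g * a).

Lemma Wg_mul x y : Wg x -> Wg y -> Wg (x * y).
Proof.
move=> hx hy; elim: hx => [|||c a _ IHa|g a hg _ IHa].
- by rewrite mul0r; apply: W0.
- by rewrite mul1r.
- by move=> a b _ IHa _ IHb; rewrite mulrDl; apply: WD.
- by rewrite -rscalerAl; apply: WZ.
- by rewrite -mulrA; apply: WM.
Qed.

Lemma Wg_G g : isG g -> Wg g.
Proof. by move=> h; rewrite -[g]mulr1; apply: WM => //; apply: W1. Qed.

Definition X (v : var) : R := qpi (pvar K v).

Lemma cm_mul (g x v : R) : cm (g * x) v = g * cm x v + cm g v * x.
Proof.
rewrite /cm mulrBr mulrBl !mulrA addrA subrK //.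
Qed.

Lemma X_true i : X (true, i) = Z i. Proof. by []. Qed.
Lemma X_false i : X (false, i) = Y i. Proof. by []. Qed.

Lemma cmG g v : isG g -> Wg (cm g (X v)).
Proof.
case: v => [[] i] [c|a b|a b]; rewrite ?X_true ?X_false.
- rewrite /cm -scaleN1r.
  apply: WD; first by apply: Wg_mul; apply: Wg_G; apply: GZ.
  by apply: WZ; apply: Wg_mul; apply: Wg_G; apply: GZ.
- by rewrite rel1z; apply: W0.
- rewrite /cm yz_Z.
  have w : Wg (Z i * cm (Y a) (Z b)) by apply: Wg_mul; apply: Wg_G; [apply: GZ | apply: GYZ].
  by rewrite -scaleN1r; apply: WD; apply: WZ.
- rewrite cmN -scaleN1r; apply: WZ; apply: Wg_G; apply: GYZ.
- by rewrite rel1; apply: W0.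
- by rewrite rel2; apply: W0.
Qed.

Lemma cmW x v : Wg x -> Wg (cm x (X v)).
Proof.
elim=> [|||c a _ IHa|g a hg ha IHa].
- by rewrite /cm mul0r mulr0 subrr; apply: W0.
- by rewrite /cm mul1r mulr1 subrr; apply: W0.
- move=> a b _ IHa _ IHb.
  rewrite (_ : cm (a + b) (X v) = cm a (X v) + cm b (X v)); first by apply: WD.
  by rewrite /cm mulrDl mulrDr opprD addrACA.
- rewrite (_ : cm (c *: a) (X v) = c *: cm a (X v)); first by apply: WZ.
  by rewrite /cm -rscalerAl -rscalerAr scalerBr.
- rewrite cm_mul; apply: WD; first by apply: WM.
  exact: Wg_mul (cmG v hg) ha.
Qed.

Lemma foldl_W xs (p : fpoly K) : Wg (qpi p) ->
  Wg (qpi (foldl (fun a b => comm a (pvar K b)) p xs)).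
Proof.
elim: xs p => [|v t IH] p hp //=; apply: IH.
by rewrite qpi_comm; apply: cmW.
Qed.

Lemma lcomm_W x xs : (1 <= size xs)%N -> Wg (qpi (lcomm K x xs)).
Proof.
case: xs => [//|v t] _; rewrite /lcomm /=; apply: foldl_W.
rewrite qpi_comm; case: x => [[] a].
- change (Wg (cm (Z a) (X v))); apply: cmW; exact: Wg_G (GZ a).
- case: v => [[] b].
    change (Wg (cm (Y a) (Z b))); exact: Wg_G (GYZ a b).
  change (Wg (cm (Y a) (Y b))); exact: Wg_G (GYY a b).
Qed.

Lemma Yproper_W f : Yproper f -> Wg (qpi f).
Proof.
elim=> {f}.
- by rewrite qpi1; apply: W1.
- by move=> i; change (Wg (Z i)); exact: Wg_G (GZ i).
- by move=> x xs h; apply: lcomm_W.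
- by move=> p q _ h e; rewrite -(qpi_peq e).
- by move=> p q _ h1 _ h2; rewrite qpiD; apply: WD.
- by move=> c p _ h; rewrite qpiZ; apply: WZ.
- by move=> p q _ h1 _ h2; rewrite qpiM; apply: Wg_mul.
Qed.

Lemma Sp_mulG g x : isG g -> Sp x -> Sp (g * x).
Proof.
move=> hg; elim=> [|a b _ IHa _ IHb|c a _ IHa|d hd].
- by rewrite mulr0; apply: Sp0.
- by rewrite mulrDr; apply: SpD.
- by rewrite -rscalerAr; apply: SpZ.
- case: hg => [c|a b|a b].
  + exact: N3.
  + exact: N1.
  + exact: N2.
Qed.

Lemma Wg_Sp x : Wg x -> Sp x.
Proof.
elim=> [||a b _ IHa _ IHb|c a _ IHa|g a hg _ IHa].
- exact: Sp0.
- have -> : (1 : R) = G (GData 0 0 0 0 [::] [::] [::]).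
    by rewrite /G /Hf big_geq // /Zt big_nil mulr1.
  by apply: SpG; do !split.
- exact: SpD.
- exact: SpZ.
- exact: Sp_mulG.
Qed.

Lemma Sp_sum x : Sp x -> exists s : seq (K * gdata),
  (forall t, List.In t s -> admissible t.2) /\ x = \sum_(t <- s) t.1 *: G t.2.
Proof.
elim=> [|a b _ [s1 [h1 e1]] _ [s2 [h2 e2]]|c a _ [s [h e]]|d hd].
- by exists [::]; rewrite big_nil.
- exists (s1 ++ s2); split; last by rewrite big_cat e1 e2.
  by move=> t ht; case: (List.in_app_or _ _ _ ht) => ?; [apply: h1 | apply: h2].
- exists [seq (c * t.1, t.2) | t <- s]; split.
    move=> t ht; case: (proj1 (List.in_map_iff _ _ _) ht) => t0 [e0 ht0]; subst t; exact: (h t0 ht0).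
  by rewrite e big_map scaler_sumr; apply: eq_bigr => t _; rewrite scalerA.
- by exists [:: (1, d)]; split; [move=> t [<-|[]] | rewrite big_cons big_nil scale1r addr0].
Qed.

Lemma qpi_psum (l : seq (fpoly K)) : qpi (psum l) = \sum_(p <- l) qpi p.
Proof. by elim: l => [|p l IH]; rewrite ?big_nil ?big_cons //= qpiD IH. Qed.

End Final.

Theorem mainTheorem5 (K : fieldType)
  (hchar : (2%:R : K) != 0)
  (hinf : forall s : seq K, exists x : K, x \notin s)
  (f : fpoly K) (hf : Yproper f) :
  exists s : seq (K * gdata),
    (forall t, List.In t s -> admissible t.2) /\
    inI (psub f (psum [seq pscale t.1 (gK K t.2) | t <- s])).
Proof.
have [s [hs e]] := Sp_sum (Wg_Sp hchar (Yproper_W hf)).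
exists s; split => //; apply: qpi_inI.
rewrite e qpi_psum big_map; apply: eq_bigr => t _.
by rewrite qpiZ qpi_gK.
Qed.
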